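(* For any inclusion $\mathcal X_0\subset\mathcal X$ of finite-dimensional operator systems and every $n\in\mathbb N$, $$\mathrm{Ind}_{\mathrm{CP}}(M_n(\mathcal X):M_n(\mathcal X_0))=\mathrm{Ind}_{\mathrm{CP}}(\mathcal X:\mathcal X_0).$$
   Context: For an operator system $\mathcal X$ with unit $1$, $\mathrm{CP}(\mathcal X)$ denotes the completely positive maps $\mathcal X\to\mathcal X$ and $\mathrm{CP}_1(\mathcal X)$ the set of $\varphi\in\mathrm{CP}(\mathcal X)$ with $\varphi(\mathbb C1)\subset\mathbb C1$. For an operator subsystem $\mathcal X_0\subset\mathcal X$, $\mathrm{Ind}_{\mathrm{CP}}(\mathcal X:\mathcal X_0)=\inf\{\|\varphi(1)\|:\varphi\in\mathrm{CP}_1(\mathcal X),\ \varphi(\mathcal X)\subset\mathcal X_0,\ \varphi-\mathrm{id}_{\mathcal X}\in\mathrm{CP}(\mathcal X)\}$ ($\infty$ if empty). $M_n(\mathcal X)$ carries its natural operator system structure (equal to $M_n\otimes_{\min}\mathcal X$), with $M_n(\mathcal X_0)$ a subsystem. *)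

(* Defs.v *)
From HB Require Import structures.
From mathcomp Require Import all_boot all_order all_algebra.
From mathcomp Require Import complex.
From mathcomp Require Import boolp classical_sets reals constructive_ereal ereal.

Set Implicit Arguments.
Unset Strict Implicit.
Unset Printing Implicit Defensive.

Import GRing.Theory Num.Theory.
Local Open Scope ring_scope.
Local Open Scope classical_set_scope.

Section OpSys.
Variable R : realType.
Local Notation C := R[i].
Variable V : lmodType C.

Definition mxstar (st : V -> V) m n (x : 'M[V]_(m, n)) : 'M[V]_(n, m) :=
  \matrix_(i, j) st (x j i).

Definition mxconj m n (a : 'M[C]_(m, n)) : 'M[C]_(n, m) :=
  \matrix_(i, j) Num.conj (a j i).

Definition lsmul m p q (a : 'M[C]_(m, p)) (x : 'M[V]_(p, q)) : 'M[V]_(m, q) :=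
  \matrix_(i, j) \sum_k a i k *: x k j.
Definition rsmul m p q (x : 'M[V]_(m, p)) (b : 'M[C]_(p, q)) : 'M[V]_(m, q) :=
  \matrix_(i, j) \sum_k b k j *: x i k.

Definition diagunit (e : V) n : 'M[V]_n :=
  \matrix_(i, j) if i == j then e else 0.

Record opsys := OpSys {
  ostar : V -> V;
  ocone : forall n, 'M[V]_n -> Prop;
  ounit : V }.

Definition hermitian (S : opsys) n (x : 'M[V]_n) := mxstar (ostar S) x = x.

(* Choi--Effros axioms: *-vector space, matrix cones that are compatible,
   proper, consisting of hermitian elements, with e an Archimedean matrix
   order unit. *)
Definition is_opsys (S : opsys) : Prop :=
  (forall u v, ostar S (u + v) = ostar S u + ostar S v) /\
  (forall (a : C) u, ostar S (a *: u) = Num.conj a *: ostar S u) /\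
  (forall u, ostar S (ostar S u) = u) /\
  ostar S (ounit S) = ounit S /\
  (forall n (x : 'M[V]_n), ocone S x -> hermitian S x) /\
  (forall n (x y : 'M[V]_n), ocone S x -> ocone S y -> ocone S (x + y)) /\
  (forall n m (a : 'M[C]_(n, m)) (x : 'M[V]_n),
      ocone S x -> ocone S (rsmul (lsmul (mxconj a) x) a)) /\
  (forall n (x : 'M[V]_n), ocone S x -> ocone S (- x) -> x = 0) /\
  (forall n (x : 'M[V]_n), hermitian S x ->
      exists r : R, 0 < r /\ ocone S (diagunit ((r%:C)%C *: ounit S) n + x)) /\
  (forall n (x : 'M[V]_n), hermitian S x ->
      (forall r : R, 0 < r -> ocone S (diagunit ((r%:C)%C *: ounit S) n + x)) ->
      ocone S x).

Definition onorm (S : opsys) (x : V) : R :=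
  inf [set t : R | 0 <= t /\
     ocone S (\matrix_(i < 2, j < 2)
                if i == j then (t%:C)%C *: ounit S
                else if val i == 0%N then x else ostar S x)].

Definition linmap (f : V -> V) : Prop :=
  forall (a : C) u v, f (a *: u + v) = a *: f u + f v.

Definition CPmap (S : opsys) (f : V -> V) : Prop :=
  linmap f /\ forall n (x : 'M[V]_n), ocone S x -> ocone S (map_mx f x).

Definition CP1map (S : opsys) (f : V -> V) : Prop :=
  CPmap S f /\ exists l : C, f (ounit S) = l *: ounit S.

(* Ind_CP(X : X0), an element of [0, +oo] (inf of the empty set is +oo) *)
Definition IndCP (S : opsys) (X0 : V -> Prop) : \bar R :=
  ereal_inf [set (onorm S (f (ounit S)))%:E | f in
    [set f : V -> V | CP1map S f /\ (forall x, X0 (f x)) /\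
                      CPmap S (fun x => f x - x)]].

End OpSys.

(* M_m(M_n(X)) identified with M_{mn}(X) via block matrices.           *)
Section MatrixOpSys.
Variable R : realType.
Local Notation C := R[i].
Variable V : lmodType C.
Variable n : nat.

Definition mxsp := 'M[V]_n.
HB.instance Definition _ := GRing.Zmodule.on mxsp.

Definition mxsp_scale (a : C) (x : mxsp) : mxsp := map_mx (fun v => a *: v) x.

Fact mxsp_scaleA a b (x : mxsp) : mxsp_scale a (mxsp_scale b x) = mxsp_scale (a * b) x.
Proof. by apply/matrixP => i j; rewrite !mxE scalerA. Qed.
Fact mxsp_scale1 (x : mxsp) : mxsp_scale 1 x = x.
Proof. by apply/matrixP => i j; rewrite !mxE scale1r. Qed.
Fact mxsp_scaleDr a (x y : mxsp) : mxsp_scale a (x + y) = mxsp_scale a x + mxsp_scale a y.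
Proof. by apply/matrixP => i j; rewrite !mxE scalerDr. Qed.
Fact mxsp_scaleDl (x : mxsp) a b : mxsp_scale (a + b) x = mxsp_scale a x + mxsp_scale b x.
Proof. by apply/matrixP => i j; rewrite !mxE scalerDl. Qed.

HB.instance Definition _ := GRing.Zmodule_isLmodule.Build C mxsp
  mxsp_scaleA mxsp_scale1 mxsp_scaleDr mxsp_scaleDl.

Definition Mn_opsys (S : opsys V) : opsys mxsp :=
  @OpSys R mxsp
    (fun x : mxsp => (mxstar (ostar S) x : mxsp))
    (fun m (x : 'M[mxsp]_m) =>
       ocone S (\mxblock_(i < m, j < m) (x i j : 'M[V]_(n, n))))
    (diagunit (ounit S) n : mxsp).

End MatrixOpSys.

(* Main.v *)
Require Import Defs.
From HB Require Import structures.
From mathcomp Require Import all_boot all_order all_algebra.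
From mathcomp Require Import complex.
From mathcomp Require Import boolp classical_sets reals constructive_ereal ereal.
Import GRing.Theory Num.Theory.
Local Open Scope ring_scope.
Set Implicit Arguments.
Unset Strict Implicit.

Section S.
Variable R : realType.
Local Notation C := R[i].
Variable V : vectType C.

Lemma conj_real (s : R) : Num.conj (s%:C)%C = (s%:C)%C.
Proof. exact: conjc_real. Qed.
Lemma conj01 (b : bool) : Num.conj (if b then 1 else 0 : C) = if b then 1 else 0.
Proof. by case: b; rewrite ?conjC1 ?conjC0. Qed.

Lemma comp_entry m k (a : 'M[C]_(m, k)) (x : 'M[V]_m) u v :
  rsmul (lsmul (mxconj a) x) a u v =
  \sum_s a s v *: \sum_r (Num.conj (a r u) *: x r s).
Proof. by rewrite !mxE; apply: eq_bigr => s _; rewrite !mxE; congr (_ *: _); apply: eq_bigr => r _; rewrite !mxE. Qed.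

Lemma sum_single (I : finType) (W : zmodType) (r0 : I) (F : I -> W) :
  (forall r, r != r0 -> F r = 0) -> \sum_r F r = F r0.
Proof. by move=> H; rewrite (bigD1 r0) //= big1 ?addr0 // => r /H. Qed.

Variable n : nat.
Lemma mxsp_scaleE a (x : mxsp V n) i j : (a *: x) i j = a *: x i j.
Proof. by rewrite /= /mxsp_scale mxE. Qed.
Lemma mxsp_scaleE' a (x : mxsp V n) : (a *: x) = map_mx ( *:%R a) x :> 'M[V]_n.
Proof. by []. Qed.
End S.

Section S2.
Variable R : realType.
Local Notation C := R[i].
Variable V : vectType C.
Variable S : opsys V.
Hypothesis HS : is_opsys S.
Local Notation st := (ostar S).
Local Notation e := (ounit S).
Local Notation cone := (ocone S).

Lemma st0 : st 0 = 0.
Proof.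
case: HS => Hadd _. have := Hadd 0 0; rewrite addr0 => H.
by apply/eqP; rewrite -(addrI (st 0) (etrans (addr0 _) H)) .
Qed.

Lemma cone_comp m k (a : 'M[C]_(m, k)) x : cone x -> cone (rsmul (lsmul (mxconj a) x) a).
Proof. by case: HS => [_ [_ [_ [_ [_ [_ [H _]]]]]]]; apply: H. Qed.
Lemma cone_add m (x y : 'M[V]_m) : cone x -> cone y -> cone (x + y).
Proof. by case: HS => [_ [_ [_ [_ [_ [H _]]]]]]; apply: H. Qed.

Lemma cone0 m : cone (0 : 'M[V]_m).
Proof.
case: HS => [_ [_ [_ [_ [_ [_ [_ [_ [H _]]]]]]]]].
have [|r [_ Hr]] := H m 0.
  by apply/matrixP => i j; rewrite !mxE st0.
have H0 := @cone_comp m m (0 : 'M[C]_(m, m)) _ Hr.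
suff E : rsmul (lsmul (mxconj (0 : 'M[C]_(m, m))) (diagunit ((r%:C)%C *: e) m + 0)) (0 : 'M[C]_(m, m)) = 0 by rewrite E in H0.
by apply/matrixP => i j; rewrite !mxE big1 // => s _; rewrite mxE scale0r.
Qed.

Lemma cone_sum m (I : finType) (F : I -> 'M[V]_m) : (forall i, cone (F i)) -> cone (\sum_i F i).
Proof.
move=> H; apply: (big_ind (fun x => cone x)); [exact: cone0|exact: cone_add|by []].
Qed.

Lemma cone_scale m (c : R) (x : 'M[V]_m) : 0 <= c -> cone x -> cone (map_mx (fun v => (c%:C)%C *: v) x).
Proof.
move=> c0 hx.
pose s := Num.sqrt c.
pose a : 'M[C]_(m, m) := \matrix_(i, j) if i == j then (s%:C)%C else 0.
have := cone_comp a hx.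
suff -> : rsmul (lsmul (mxconj a) x) a = map_mx (fun v => (c%:C)%C *: v) x by [].
apply/matrixP => u v; rewrite comp_entry (@sum_single _ _ v); last first.
  by move=> r /negbTE H; rewrite mxE H scale0r.
rewrite (@sum_single _ _ u); last first.
  by move=> r /negbTE H; rewrite mxE H rmorph0 scale0r.
rewrite !mxE !eqxx conj_real scalerA -rmorphM.
by rewrite -expr2 sqr_sqrtr.
Qed.

End S2.

Section S3.
Variable R : realType.
Local Notation C := R[i].
Variable V : vectType C.
Variable S : opsys V.
Hypothesis HS : is_opsys S.
Local Notation st := (ostar S).
Local Notation e := (ounit S).
Local Notation cone := (ocone S).
Variable n : nat.

Lemma diagunitE (x : V) (i j : 'I_n) : diagunit x n i j = if i == j then x else 0.
Proof. by rewrite mxE. Qed.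

Lemma K1 m (x : 'M[V]_m) : cone x ->
  cone (\mxblock_(i < m, j < m) (diagunit (x i j) n : 'M[V]_(n, n))).
Proof.
move=> hx.
pose a (k : 'I_n) : 'M[C]_(m, \sum_(i < m) n) := \matrix_(r, s)
  if (tagnat.sig1 s == r) && (val (tagnat.sig2 s) == val k) then 1 else 0.
suff -> : (\mxblock_(i < m, j < m) (diagunit (x i j) n : 'M[V]_(n, n))) =
   \sum_k rsmul (lsmul (mxconj (a k)) x) (a k).
  by apply: (@cone_sum _ _ _ HS) => k; apply: (cone_comp HS).
apply/matrixP => u v; rewrite [LHS]mxE.
rewrite (_ : (\sum_k rsmul (lsmul (mxconj (a k)) x) (a k)) u v = \sum_k rsmul (lsmul (mxconj (a k)) x) (a k) u v); last exact: summxE.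
under eq_bigr => k _.
  rewrite comp_entry (@sum_single _ _ (tagnat.sig1 v)); last first.
    by move=> s /negbTE H; rewrite mxE eq_sym H scale0r.
  rewrite (@sum_single _ _ (tagnat.sig1 u)); last first.
    by move=> r /negbTE H; rewrite mxE eq_sym H /= conjC0 scale0r.
  rewrite !mxE !eqxx /= conj01.
  over.
rewrite diagunitE (@sum_single _ _ (tagnat.sig2 u)) /=; last first.
  move=> k Hk.
  have Hu : (nat_of_ord (tagnat.sig2 u) == nat_of_ord k) = false.
    by apply/negbTE; apply: contra Hk => /eqP H; apply/eqP/val_inj.
  by rewrite Hu scale0r scaler0.
rewrite eqxx scale1r.
case: (tagnat.sig2 u =P tagnat.sig2 v) => [->|NE]; first by rewrite eqxx scale1r.
by rewrite ifF ?scale0r //; apply/negbTE/eqP => E; apply: NE; apply/val_inj.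
Qed.

Lemma rank_cond m (s : 'I_(\sum_(i < m) n)) (v : 'I_m) (k : 'I_n) :
  (tagnat.sig1 s == v) && (val (tagnat.sig2 s) == val k) =
  (s == @tagnat.Rank m (fun _ => n) v k).
Proof. by rewrite -[s in RHS]tagnat.sig2K -[RHS]val_eqE tagnat.eq_Rank. Qed.

Lemma sig2_Rank m (v : 'I_m) (k : 'I_n) :
  tagnat.sig2 (@tagnat.Rank m (fun _ => n) v k) = k.
Proof. by apply: val_inj; rewrite tagnat.Rank2K. Qed.

Lemma K2 m (Y : 'M['M[V]_n]_m) (k : 'I_n) :
  cone (\mxblock_(i < m, j < m) (Y i j : 'M[V]_(n, n))) ->
  cone (\matrix_(i, j) Y i j k k).
Proof.
pose b : 'M[C]_(\sum_(i < m) n, m) := \matrix_(r, i)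
  if (tagnat.sig1 r == i) && (val (tagnat.sig2 r) == val k) then 1 else 0.
move=> hY; have := cone_comp HS b hY.
suff -> : rsmul (lsmul (mxconj b) (\mxblock_(i < m, j < m) (Y i j : 'M[V]_(n, n)))) b
   = \matrix_(i, j) Y i j k k by [].
apply/matrixP => u v; rewrite comp_entry (@sum_single _ _ (@tagnat.Rank m (fun _ => n) v k)); last first.
  by move=> s Hs; rewrite mxE rank_cond (negbTE Hs) scale0r.
rewrite (@sum_single _ _ (@tagnat.Rank m (fun _ => n) u k)); last first.
  by move=> r Hr; rewrite mxE rank_cond (negbTE Hr) conjC0 scale0r.
rewrite !mxE !rank_cond !eqxx conjC1 !scale1r.
rewrite !sig2_Rank !tagnat.Rank1K.
done.
Qed.

Lemma K_iff (hn : (0 < n)%N) m (x : 'M[V]_m) :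
  cone x <-> cone (\mxblock_(i < m, j < m) (diagunit (x i j) n : 'M[V]_(n, n))).
Proof.
split; first exact: K1.
pose Y : 'M['M[V]_n]_m := \matrix_(i, j) diagunit (x i j) n.
have E : (\mxblock_(i < m, j < m) (diagunit (x i j) n : 'M[V]_(n, n))) =
         (\mxblock_(i < m, j < m) (Y i j : 'M[V]_(n, n))).
  by apply: eq_mxblock => i j; rewrite mxE.
rewrite E => /(K2 (Ordinal hn)).
suff -> : (\matrix_(i, j) Y i j (Ordinal hn) (Ordinal hn)) = x by [].
by apply/matrixP => i j; rewrite !mxE eqxx.
Qed.

Lemma onormD (hn : (0 < n)%N) (y : V) :
  onorm (Mn_opsys n S) (diagunit y n : mxsp V n) = onorm S y.
Proof.
rewrite /onorm /=; congr inf; apply/seteqP.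
have E : forall t : R,
  \mxblock_(i < 2, j < 2) ((\matrix_(i0 < 2, j0 < 2) (if i0 == j0
      then (t%:C)%C *: (diagunit e n : mxsp V n)
      else if val i0 == 0%N then (diagunit y n : mxsp V n) else mxstar st (diagunit y n))) i j : 'M[V]_(n, n))
  = \mxblock_(i < 2, j < 2) (diagunit ((\matrix_(i < 2, j < 2)
                if i == j then (t%:C)%C *: e
                else if val i == 0%N then y else st y) i j) n : 'M[V]_(n, n)).
  move=> t; apply: eq_mxblock => i j; rewrite !mxE.
  apply/matrixP => p q; rewrite !diagunitE.
  case: ifP => _; first by rewrite mxsp_scaleE diagunitE; case: ifP => //; rewrite scaler0.
  case: ifP => _; first by rewrite diagunitE.
  rewrite /mxstar mxE diagunitE eq_sym; case: ifP => // _; exact: st0.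
split => t [t0 H]; split => //.
  by apply/(K_iff hn); rewrite -E; exact: H.
by move/(K_iff hn): H; rewrite -E.
Qed.
End S3.

Section S4.
Variable R : realType.
Local Notation C := R[i].
Variable V : vectType C.
Variable S : opsys V.
Hypothesis HS : is_opsys S.
Local Notation st := (ostar S).
Local Notation e := (ounit S).
Local Notation cone := (ocone S).
Variable n : nat.
Local Notation MS := (Mn_opsys n S).
Local Notation D x := (diagunit x n : mxsp V n).

Lemma lin0 (g : V -> V) : linmap g -> g 0 = 0.
Proof. by move=> H; have := H (-1) 0 0; rewrite scaler0 addr0 scaleN1r addNr. Qed.

Lemma L1 (g : V -> V) : CPmap S g -> CPmap MS (map_mx g : mxsp V n -> mxsp V n).
Proof.
move=> [gl gc]; split.
  by move=> a u v; apply/matrixP => i j; rewrite !mxE gl.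
move=> m X /= HX.
have -> : (\mxblock_(i < m, j < m) ((map_mx (map_mx g) X) i j : 'M[V]_(n, n))) =
   map_mx g (\mxblock_(i < m, j < m) (X i j : 'M[V]_(n, n))).
  by apply/matrixP => u v; rewrite !mxE.
exact: gc.
Qed.

Definition psi (H : mxsp V n -> mxsp V n) (x : V) : V :=
  (((n%:R)^-1 : R)%:C)%C *: \sum_(k < n) (H (D x)) k k.

Lemma D_lin a (u v : V) : D (a *: u + v) = a *: D u + D v.
Proof.
apply/matrixP => i j; rewrite mxE [RHS]mxE mxsp_scaleE !diagunitE.
by case: ifP; rewrite ?scaler0 ?addr0.
Qed.

Lemma L2 (H : mxsp V n -> mxsp V n) : CPmap MS H -> CPmap S (psi H).
Proof.
move=> [hl hc]; split.
  move=> a u v; rewrite /psi D_lin hl.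
  rewrite scalerA mulrC -scalerA -scalerDr; congr (_ *: _).
  rewrite scaler_sumr -big_split /=; apply: eq_bigr => k _.
  by rewrite mxE mxsp_scaleE.
move=> m x hx.
have -> : map_mx (psi H) x = map_mx (fun v => (((n%:R)^-1 : R)%:C)%C *: v)
    (\sum_(k < n) \matrix_(i, j) (H (D (x i j))) k k).
  apply/matrixP => i j; rewrite !mxE summxE; congr (_ *: _).
  by apply: eq_bigr => k _; rewrite mxE.
apply: (cone_scale HS); first by rewrite invr_ge0 ler0n.
apply: (cone_sum HS) => k.
pose X : 'M[mxsp V n]_m := \matrix_(i, j) D (x i j).
have hX : ocone MS X.
  rewrite /=.
  have -> : (\mxblock_(i < m, j < m) (X i j : 'M[V]_(n, n))) =
            (\mxblock_(i < m, j < m) (diagunit (x i j) n : 'M[V]_(n, n))).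
    by apply: eq_mxblock => i j; rewrite mxE.
  exact: (K1 HS).
have := K2 HS k (hc _ _ hX).
suff -> : (\matrix_(i, j) ((map_mx H X) i j : 'M[V]_n) k k) = \matrix_(i, j) (H (D (x i j))) k k by [].
by apply/matrixP => i j; rewrite !mxE.
Qed.

End S4.

Lemma scaleD (R : realType) (V : vectType R[i]) n (l : R[i]) (x : V) :
  l *: (diagunit x n : mxsp V n) = (diagunit (l *: x) n : mxsp V n).
Proof.
apply/matrixP => i j; rewrite mxsp_scaleE !diagunitE.
by case: ifP; rewrite ?scaler0.
Qed.

Lemma avgK (R : realType) (V : vectType R[i]) n (w : V) : (0 < n)%N ->
  (((n%:R)^-1 : R)%:C)%C *: (w *+ n) = w.
Proof.
move=> hn; rewrite -scaler_nat scalerA -(rmorph_nat (real_complex R)) -rmorphM.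
by rewrite mulVf ?rmorph1 ?scale1r // pnatr_eq0 -lt0n.
Qed.

Theorem corollary3p11 (R : realType) (V : vectType R[i]) (S : opsys V)
    (U : {vspace V}) (n : nat) :
  is_opsys S ->
  ounit S \in U ->
  (forall x, x \in U -> ostar S x \in U) ->
  (0 < n)%N ->
  IndCP (Mn_opsys n S) (fun x : mxsp V n => forall i j, x i j \in U) =
  IndCP S (fun x => x \in U).
Proof.
move=> HS _ _ hn.
rewrite /IndCP; congr ereal_inf; apply/seteqP; split.
- move=> _ [F [[HF [l Hl]] [HFX HFid]] <-].
  have Hpe : psi F (ounit S) = l *: ounit S.
    rewrite /psi.
    have -> : (diagunit (ounit S) n : mxsp V n) = ounit (Mn_opsys n S) by [].
    rewrite Hl (eq_bigr (fun _ => l *: ounit S)); last first.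
      by move=> k _; rewrite mxsp_scaleE diagunitE eqxx.
    by rewrite sumr_const card_ord avgK.
  exists (psi F); last by rewrite Hpe Hl /= scaleD onormD.
  split; [split|split].
  + exact: L2.
  + by exists l.
  + by move=> x; rewrite /psi memvZ // memv_suml // => k _; apply: HFX.
  + have E : psi (fun X => F X - X) = (fun x => psi F x - x).
      apply/funext => x; rewrite /psi.
      rewrite (eq_bigr (fun k => F (diagunit x n) k k - (diagunit x n : mxsp V n) k k)); last first.
        by move=> k _; rewrite !mxE.
      rewrite sumrB scalerBr; congr (_ - _).
      rewrite (eq_bigr (fun _ => x)); last by move=> k _; rewrite diagunitE eqxx.
      by rewrite sumr_const card_ord avgK.
    rewrite -E; exact: L2.
- move=> _ [f [[Hf [l Hl]] [HfX Hfid]] <-].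
  exists (map_mx f : mxsp V n -> mxsp V n); last first.
    have -> : map_mx f (ounit (Mn_opsys n S)) = (diagunit (f (ounit S)) n : mxsp V n).
      apply/matrixP => i j; rewrite !mxE.
      by case: ifP => _ //; rewrite (lin0 (proj1 Hf)).
    by rewrite onormD.
  split; [split|split].
  + exact: L1.
  + exists l; rewrite /= scaleD; apply/matrixP => i j; rewrite !mxE.
    by case: ifP => _; rewrite ?Hl // (lin0 (proj1 Hf)).
  + by move=> x i j; rewrite mxE.
  + have E : map_mx (fun v => f v - v) = (fun x : mxsp V n => map_mx f x - x).
      by apply/funext => x; apply/matrixP => i j; rewrite !mxE.
    rewrite -E; exact: L1.
Qed.
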